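(* For $s\geq0$ let $(G_s,\varphi)$ be as in the context, with induced metric having scalar curvature $\mathrm{scal}_s$ and Ricci operator $\mathrm{Ric}_s$, and let $F(s)=\mathrm{scal}_s^2/|\mathrm{Ric}_s|^2$. Then $F(s)=\dfrac{(75+64s^2)^2}{1725+4224s^2+4096s^4}$, and: (a) on $[0,\infty)$, $F$ attains its maximum at $s=0$, with $F(0)=\tfrac{75}{23}>3$; (b) at $s=\tfrac{\sqrt{15}}8$ (the value for which $(G_s,\varphi)$ is a steady Laplacian soliton), $F(s)=\tfrac{135}{49}$; (c) at $s=\tfrac58$ (the value for which $(G_s,\langle\cdot,\cdot\rangle)$ is an expanding Ricci soliton), $F(s)=\tfrac52$.
   Context: For $s\in\mathbb R$, $\mathfrak g_s$ is the real Lie algebra with basis $\{e_1,\dots,e_7\}$ whose only nonzero brackets of basis elements (up to antisymmetry) are $[e_1,e_3]=-e_6$, $[e_1,e_4]=-e_5$, $[e_2,e_3]=-e_5$, $[e_7,e_i]=(A_s)_{ii}e_i$ ($i=1,\dots,6$), with $A_s=\mathrm{Diag}(\tfrac38+s,-\tfrac18+s,\tfrac38-s,-\tfrac18-s,\tfrac14,\tfrac34)$; $G_s$ is the simply connected Lie group with Lie algebra $\mathfrak g_s$, with left-invariant $G_2$-structure $\varphi=e^{127}+e^{347}+e^{567}+e^{135}-e^{146}-e^{236}-e^{245}$ ($\{e^i\}$ dual basis), whose induced left-invariant metric $\langle\cdot,\cdot\rangle$ makes $\{e_i\}$ orthonormal. $|\mathrm{Ric}_s|^2=\mathrm{tr}(\mathrm{Ric}_s^2)$.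 *)

(* Defs.v *)
From mathcomp Require Import all_boot all_order all_algebra.
Set Implicit Arguments. Unset Strict Implicit. Unset Printing Implicit Defensive.
Import Order.TTheory GRing.Theory Num.Theory.
Local Open Scope ring_scope.

(* Metric Lie algebra (g, <.,.>) given by structure constants w.r.t. an
   orthonormal basis e_0..e_{n-1}:  [e_i, e_j] = \sum_k br i j k e_k.
   All objects are those of the left-invariant metric on the simply
   connected Lie group with this Lie algebra. *)
Section MetricLieAlgebra.
Variables (R : fieldType) (n : nat) (br : 'I_n -> 'I_n -> 'I_n -> R).

(* Koszul formula for left-invariant fields:
   <nabla_{e_i} e_j, e_k> = 1/2 (<[e_i,e_j],e_k> - <[e_j,e_k],e_i> + <[e_k,e_i],e_j>) *)
Definition lc_conn (i j k : 'I_n) : R := (br i j k - br j k i + br k i j) / 2%:R.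

(* <R(e_i,e_j) e_k, e_m>, with R(X,Y) = nabla_X nabla_Y - nabla_Y nabla_X - nabla_[X,Y] *)
Definition curv (i j k m : 'I_n) : R :=
  \sum_(l < n) lc_conn j k l * lc_conn i l m
  - \sum_(l < n) lc_conn i k l * lc_conn j l m
  - \sum_(l < n) br i j l * lc_conn l k m.

(* Ricci tensor Ric(Y,Z) = tr (X |-> R(X,Y)Z); in the orthonormal basis its
   matrix is also the matrix of the Ricci operator. *)
Definition ricci_mx : 'M[R]_n := \matrix_(j, k) \sum_(i < n) curv i j k i.

Definition scal_curv : R := \tr ricci_mx.
Definition ricci_norm2 : R := \tr (ricci_mx *m ricci_mx).
End MetricLieAlgebra.

(* The family g_s (0-indexed basis: e_1..e_7 of the paper are 0..6). *)
Definition A_diag (R : fieldType) (s : R) (i : nat) : R :=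
  match i with
  | 0 => 3%:R / 8%:R + s
  | 1 => - (1 / 8%:R) + s
  | 2 => 3%:R / 8%:R - s
  | 3 => - (1 / 8%:R) - s
  | 4 => 1 / 4%:R
  | 5 => 3%:R / 4%:R
  | _ => 0
  end.

Definition br_nat (R : fieldType) (s : R) (i j k : nat) : R :=
  match i, j, k with
  | 0, 2, 5 => -1 | 2, 0, 5 => 1
  | 0, 3, 4 => -1 | 3, 0, 4 => 1
  | 1, 2, 4 => -1 | 2, 1, 4 => 1
  | 6, i', k' => if (i' == k') && (i' < 6)%N then A_diag s i' else 0
  | i', 6, k' => if (i' == k') && (i' < 6)%N then - A_diag s i' else 0
  | _, _, _ => 0
  end.

Definition g_br (R : fieldType) (s : R) (i j k : 'I_7) : R := br_nat s i j k.

Definition scal_s (R : fieldType) (s : R) : R := scal_curv (g_br s).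
Definition ric_norm2_s (R : fieldType) (s : R) : R := ricci_norm2 (g_br s).

Definition F_s (R : fieldType) (s : R) : R := scal_s s ^+ 2 / ric_norm2_s s.

(* Main.v *)
Require Import Defs.
From mathcomp Require Import all_boot all_order all_algebra ring lra.
Import Order.TTheory GRing.Theory Num.Theory.
Local Open Scope ring_scope.
Set Implicit Arguments. Unset Strict Implicit.

Section S.
Variable (R : realFieldType) (s : R).
Definition sum7 (F : nat -> R) := F 0%N + F 1%N + F 2%N + F 3%N + F 4%N + F 5%N + F 6%N.
Lemma sum7E (F : nat -> R) : \sum_(i < 7) F i = sum7 F.
Proof. by rewrite !big_ord_recl big_ord0 /sum7 /= !addrA addr0. Qed.
Definition lcn i j k := (br_nat s i j k - br_nat s j k i + br_nat s k i j) / 2%:R.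
Definition curvn i j k m :=
  sum7 (fun l => lcn j k l * lcn i l m) - sum7 (fun l => lcn i k l * lcn j l m)
  - sum7 (fun l => br_nat s i j l * lcn l k m).
Definition ricn j k := sum7 (fun i => curvn i j k i).
Lemma ricE (j k : 'I_7) : ricci_mx (g_br s) j k = ricn j k.
Proof.
rewrite mxE /ricn -sum7E; apply: eq_bigr => i _.
by rewrite /curv /curvn -!sum7E.
Qed.
Definition E (j k : nat) : R :=
  if j != k then 0 else
  match j with
  | 0 => - (25%:R/16%:R) - 3%:R/2%:R * s
  | 1 => - (5%:R/16%:R) - 3%:R/2%:R * s
  | 2 => - (25%:R/16%:R) + 3%:R/2%:R * s
  | 3 => - (5%:R/16%:R) + 3%:R/2%:R * s
  | 4 => 5%:R/8%:R
  | 5 => - (5%:R/8%:R)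
  | _ => - (15%:R/16%:R) - 4%:R * s^+2
  end.
Lemma ricnE j k : (j < 7)%N -> (k < 7)%N -> ricn j k = E j k.
Proof.
move=> hj hk.
case: j hj => [|[|[|[|[|[|[|j]]]]]]] hj //;
case: k hk => [|[|[|[|[|[|[|k]]]]]]] hk //;
rewrite /ricn /curvn /sum7 /lcn /E /=; field; rewrite ?pnatr_eq0 //=.
Qed.
End S.
Section S2.
Variable (R : realFieldType) (s : R).
Lemma scalE : scal_s s = - (75%:R + 64%:R * s^+2) / 16%:R.
Proof.
rewrite /scal_s /scal_curv /mxtrace.
under eq_bigr => i _ do rewrite ricE.
rewrite (sum7E (fun i => ricn s i i)) /sum7 !ricnE // /E /=.
field; rewrite ?pnatr_eq0 //=.
Qed.
Lemma normE : ric_norm2_s s = (1725%:R + 4224%:R * s ^+ 2 + 4096%:R * s ^+ 4) / 256%:R.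
Proof.
rewrite /ric_norm2_s /ricci_norm2 /mxtrace.
under eq_bigr => i _ do rewrite mxE.
under eq_bigr => i _ do under eq_bigr => k _ do rewrite !ricE.
under eq_bigr => i _ do rewrite (sum7E (fun k => ricn s i k * ricn s k i)).
rewrite (sum7E (fun i => sum7 (fun k => ricn s i k * ricn s k i))) /sum7 !ricnE // /E /=.
field; rewrite ?pnatr_eq0 //=.
Qed.
End S2.
Lemma FE (R : realFieldType) (s : R) : F_s s = (75%:R + 64%:R * s ^+ 2) ^+ 2
             / (1725%:R + 4224%:R * s ^+ 2 + 4096%:R * s ^+ 4).
Proof.
have hp : 0 < 1725%:R + 4224%:R * s ^+ 2 + 4096%:R * s ^+ 4 :> R.
  have h2 : 0 <= s ^+ 2 by rewrite sqr_ge0.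
  have h4 : 0 <= s ^+ 4 by rewrite (_ : 4 = 2 * 2)%N // exprM sqr_ge0.
  lra.
rewrite /F_s scalE normE; field.
by rewrite ?pnatr_eq0 lt0r_neq0.
Qed.

Theorem corollary4p12 (R : rcfType) :
  (forall s : R, 0 <= s ->
     F_s s = (75%:R + 64%:R * s ^+ 2) ^+ 2
             / (1725%:R + 4224%:R * s ^+ 2 + 4096%:R * s ^+ 4))
  /\ (forall s : R, 0 <= s -> F_s s <= F_s 0)
  /\ F_s (0 : R) = 75%:R / 23%:R
  /\ 3%:R < F_s (0 : R)
  /\ F_s (Num.sqrt (15%:R : R) / 8%:R) = 135%:R / 49%:R
  /\ F_s (5%:R / 8%:R : R) = 5%:R / 2%:R.
Proof.
have F0 : F_s (0 : R) = 75%:R / 23%:R.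
  rewrite FE expr0n /=; field; by rewrite ?pnatr_eq0.
split; first by move=> s _; exact: FE.
split.
  move=> s _; rewrite F0 FE.
  have h2 : 0 <= s ^+ 2 by rewrite sqr_ge0.
  have h4 : s ^+ 4 = s ^+ 2 * s ^+ 2 by rewrite -exprD.
  have hp : 0 < 1725%:R + 4224%:R * s ^+ 2 + 4096%:R * s ^+ 4 :> R.
    rewrite h4; nra.
  rewrite ler_pdivrMr // h4; nra.
split; first exact: F0.
split; first by rewrite F0; lra.
split.
  have hs : (Num.sqrt (15%:R : R) / 8%:R) ^+ 2 = 15%:R / 64%:R.
    by rewrite expr_div_n sqr_sqrtr ?ler0n // -natrX.
  have h4 : (Num.sqrt (15%:R : R) / 8%:R) ^+ 4 = (15%:R / 64%:R) ^+ 2.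
    by rewrite -hs -exprM.
  rewrite FE h4 hs; field; by rewrite ?pnatr_eq0.
rewrite FE; field; by rewrite ?pnatr_eq0.
Qed.
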